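(* Let $\mathbf{u}$ be the utility profile of the truth-biased voters, let $\mathbf{a}$ be their truthful ballot vector, and let $\mathbf{a}^P$ be the ballot vector of the principled voters. Let $j=\min\{r\mid c_r\in W(\mathbf{a}+\mathbf{a}^P)\}$. Then $\mathbf{a}$ is a PNE of $(\mathcal{T},R^L,\mathbf{u},\mathbf{a}^P)$ if and only if neither of the following conditions holds: (1) $|W(\mathbf{a}+\mathbf{a}^P)|>1$, and there exist a candidate $c_k\in W(\mathbf{a}+\mathbf{a}^P)$ and a voter $i\in N$ such that $a_i\neq c_k$ and $c_k\succ_i c_j$; (2) $H(\mathbf{a}+\mathbf{a}^P)\neq\emptyset$, and there exist a candidate $c_k\in H(\mathbf{a}+\mathbf{a}^P)$ and a voter $i\in N$ such that $a_i\neq c_k$, $c_k\succ_i c_j$, and $k<j$.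
   Context: Let $C=\{c_1,\dots,c_m\}$ be candidates. There is a set $N=\{1,\dots,n\}$ of truth-biased voters, each with an injective utility function $u_i:C\to\mathbb{N}$ inducing $c\succ_i c'$ iff $u_i(c)>u_i(c')$; $a_i$ is $i$'s top candidate and $\mathbf{a}=(a_1,\dots,a_n)$. There is also a set $P=\{n+1,\dots,n+s\}$ of principled voters, who are not players and always vote for their top candidate; their ballot vector is $\mathbf{a}^P\in C^s$. A ballot vector of the truth-biased voters is $\mathbf{b}=(b_1,\dots,b_n)$, $b_i\in C\cup\{\bot\}$; $\mathbf{b}+\mathbf{a}^P$ is the combined ballot vector. For a ballot vector $\mathbf{x}$, $\mathrm{sc}(c,\mathbf{x})$ is the number of ballots for $c$, $M(\mathbf{x})=\max_c\mathrm{sc}(c,\mathbf{x})$, $W(\mathbf{x})=\{c:\mathrm{sc}(c,\mathbf{x})=M(\mathbf{x})\}$, $H(\mathbf{x})=\{c:\mathrm{sc}(c,\mathbf{x})=M(\mathbf{x})-1\}$. Under lexicographic tie-breaking $R^L$ the winner of $\mathbf{b}+\mathbf{a}^P$ is the $c_r\in W(\mathbf{b}+\mathbf{a}^P)$ with smallest index $r$. Fix $0<\varepsilon<\min\{1/m,1/n\}$. If $c$ is the winner, truth-biased voter $i$'s utility is $u_i(c)$ if $b_i\in C\setminus\{a_i\}$, $u_i(c)+\varepsilon$ if $b_i=a_i$, and $-\infty$ if $b_i=\bot$. The game $(\mathcal{T},R^L,\mathbf{u},\mathbf{a}^P)$ has players $N$ with action sets $C\cup\{\bot\}$; a PNE is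 a ballot vector $\mathbf{b}$ from which no voter in $N$ can strictly increase her utility by unilaterally changing her ballot. *)

(* Defs.v *)
From mathcomp Require Import all_boot all_order all_algebra.
Set Implicit Arguments. Unset Strict Implicit. Unset Printing Implicit Defensive.
Import Order.TTheory GRing.Theory Num.Theory.

(* Conventions: candidates c_1..c_M are 'I_M (index r-1 for c_r), with
   M = m.+1 >= 1 candidates; truth-biased voters are 'I_n; principled voters 'I_s.
   A ballot of a truth-biased voter is an [option 'I_M]: [None] is the
   abstention ballot (bottom). *)

Section Game.
Variables (M n s : nat).
Notation cand := 'I_M.+1.

Definition top (u : 'I_n -> cand -> nat) (i : 'I_n) : cand :=
  [arg max_(c > ord0) u i c].

Definition truthful (u : 'I_n -> cand -> nat) : 'I_n -> option cand :=
  fun i => Some (top u i).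

Definition score (b : 'I_n -> option cand) (aP : 'I_s -> cand) (c : cand) : nat :=
  #|[set i | b i == Some c]| + #|[set p | aP p == c]|.

Definition maxscore b aP : nat := \max_(c : cand) score b aP c.

Definition Wset b aP : {set cand} := [set c | score b aP c == maxscore b aP].

Definition Hset b aP : {set cand} :=
  [set c | (0 < maxscore b aP)%N && (score b aP c == (maxscore b aP).-1)].

Definition winner b aP : cand := [arg min_(c < ord0 in Wset b aP) (val c)].

(* utilities are extended rationals: None = -infinity *)
Definition util (eps : rat) (u : 'I_n -> cand -> nat) (b : 'I_n -> option cand)
    (aP : 'I_s -> cand) (i : 'I_n) : option rat :=
  match b i with
  | None => None
  | Some x => Some (((u i (winner b aP))%:R + (if x == top u i then eps else 0))%R)
  end.

Definition ext_lt (x y : option rat) : bool :=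
  match x, y with
  | None, Some _ => true
  | Some a, Some b => (a < b)%R
  | _, _ => false
  end.

Definition deviate (b : 'I_n -> option cand) (i : 'I_n) (x : option cand) :
    'I_n -> option cand := fun k => if k == i then x else b k.

Definition is_PNE eps u aP (b : 'I_n -> option cand) : Prop :=
  forall (i : 'I_n) (x : option cand),
    ~ ext_lt (util eps u b aP i) (util eps u (deviate b i x) aP i).

End Game.

(* Main.v *)
Require Import Defs.
From mathcomp Require Import all_boot all_order all_algebra.
From mathcomp Require Import zify ring lra.
Import Order.TTheory GRing.Theory Num.Theory.

Set Implicit Arguments. Unset Strict Implicit.
Section H.
Variables (m n s : nat).
Implicit Types (b : 'I_n -> option 'I_m.+1) (aP : 'I_s -> 'I_m.+1).

Lemma arg_min_indep (I : finType) (i0 i1 : I) (P : pred I) (F : I -> nat) :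
  P i1 -> arg_min i0 P F = arg_min i1 P F.
Proof.
move=> Pi1.
rewrite /arg_min /extremum.
case: pickP => [y _|H] //=; exfalso.
case: (@arg_minnP I i1 P F Pi1) => x Px Hx.
have := H x; rewrite /= Px /=; move/negbT/negP; apply.
by apply/forallP => z; apply/implyP => Pz; apply: Hx.
Qed.

Lemma maxscore_eq b aP w : (forall d, score b aP d <= score b aP w) ->
  maxscore b aP = score b aP w.
Proof.
move=> H; apply/eqP; rewrite eqn_leq; apply/andP; split.
  by apply/bigmax_leqP => d _; apply: H.
exact: leq_bigmax.
Qed.

Lemma winner_spec b aP :
  (forall d, score b aP d <= score b aP (winner b aP)) /\
  (forall d, score b aP d = score b aP (winner b aP) -> (winner b aP <= d)%N).
Proof.
have [c0 Hc0] := @bigop.eq_bigmax _ (score b aP) (ltac:(by rewrite card_ord)).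
have Wc0 : c0 \in Wset b aP by rewrite inE /maxscore Hc0.
rewrite /winner (@arg_min_indep _ ord0 c0 _ _ Wc0).
case: arg_minnP => // w Ww Hmin.
have : w \in Wset b aP := Ww.
rewrite inE /maxscore Hc0 => /eqP Hw.
split.
  by move=> d; rewrite Hw -Hc0; apply: leq_bigmax.
move=> d Hd; apply: Hmin.
have : d \in Wset b aP by rewrite inE /maxscore Hc0 -Hw Hd.
done.
Qed.

Lemma winner_char b aP w :
  (forall d, score b aP d <= score b aP w) ->
  (forall d, score b aP d = score b aP w -> (w <= d)%N) -> winner b aP = w.
Proof.
move=> H1 H2; have [S1 S2] := winner_spec b aP.
have E : score b aP (winner b aP) = score b aP w.
  by apply/eqP; rewrite eqn_leq H1 S1.
apply: val_inj; apply/eqP; rewrite eqn_leq S2 ?H2 //.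
Qed.

Lemma score_dev b aP i x d :
  score (deviate b i x) aP d + (b i == Some d) = score b aP d + (x == Some d).
Proof.
rewrite /score.
rewrite (cardsD1 i [set k | deviate b i x k == Some d]).
rewrite (cardsD1 i [set k | b k == Some d]).
have -> : [set k | deviate b i x k == Some d] :\ i = [set k | b k == Some d] :\ i.
  by apply/setP => k; rewrite !inE /deviate; case: eqP.
rewrite !inE /deviate eqxx.
lia.
Qed.

Lemma top_max (u : 'I_n -> 'I_m.+1 -> nat) i c : u i c <= u i (top u i).
Proof. rewrite /top; case: arg_maxnP => [//|t _ H]; exact: H. Qed.

End H.
Theorem proposition9 (m n s : nat) (eps : rat)
  (heps0 : (0 < eps)%R) (hepsm : (eps * (m.+1)%:R < 1)%R) (hepsn : (eps * n%:R < 1)%R)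
  (u : 'I_n -> 'I_m.+1 -> nat) (hinj : forall i, injective (u i))
  (aP : 'I_s -> 'I_m.+1) :
  let a := truthful u in
  let j := winner a aP in
  is_PNE eps u aP a <->
  ~ ( ((1 < #|Wset a aP|)%N /\
        exists k, k \in Wset a aP /\
          exists i : 'I_n, top u i != k /\ (u i j < u i k)%N)
    \/ (Hset a aP != set0 /\
        exists k, k \in Hset a aP /\
          exists i : 'I_n, [/\ top u i != k, (u i j < u i k)%N & (k < j)%N]) ).
Proof.
move=> a j.
have eps1 : (eps < 1)%R.
  have h1 : (1 <= (m.+1)%:R :> rat)%R by rewrite ler1n.
  nra.
have [Smax Smin] := winner_spec a aP; rewrite -/j in Smax Smin.
have Mj := maxscore_eq Smax.
have inW k : (k \in Wset a aP) = (score a aP k == score a aP j) by rewrite inE Mj.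
have inH k : (k \in Hset a aP) =
   (0 < score a aP j)%N && (score a aP k == (score a aP j).-1) by rewrite inE Mj.
have utilA i : util eps u a aP i = Some ((u i j)%:R + eps)%R.
  by rewrite /util /a /truthful eqxx.
have utilD i c : util eps u (deviate a i (Some c)) aP i =
   Some ((u i (winner (deviate a i (Some c)) aP))%:R + (if c == top u i then eps else 0))%R.
  by rewrite /util /deviate eqxx.
have D i c d : (score (deviate a i (Some c)) aP d + (top u i == d) =
              score a aP d + (c == d))%N.
  by have := score_dev a aP i (Some c) d; rewrite /a /truthful /=.
split.
- move=> PNE [[_ [k [kW [i [ki lt]]]]] | [_ [k [kH [i [ki lt kj]]]]]].
  + apply: (PNE i (Some k)).
    rewrite utilA utilD.
    have -> : winner (deviate a i (Some k)) aP = k.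
      move: kW; rewrite inW => /eqP kW.
      have Dk := D i k k; rewrite eqxx (negbTE ki) in Dk.
      apply: winner_char => [d|d].
        have Dd := D i k d; have := Smax d.
        case: (eqVneq k d) => [<-|kd]; first by []. rewrite (negbTE kd) in Dd.
        case: (top u i == d) Dd => /=; lia.
      have Dd := D i k d; have := Smax d.
      case: (eqVneq k d) => [->|kd] //. rewrite (negbTE kd) in Dd.
      case: (top u i == d) Dd => /=; lia.
    rewrite [k == _]eq_sym (negbTE ki) /= addr0.
    have : ((u i j).+1%:R <= (u i k)%:R :> rat)%R by rewrite ler_nat.
    rewrite -addn1 natrD; lra.
  + apply: (PNE i (Some k)).
    rewrite utilA utilD.
    have -> : winner (deviate a i (Some k)) aP = k.
      move: kH; rewrite inH => /andP [pos /eqP kH].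
      have Dk := D i k k; rewrite eqxx (negbTE ki) in Dk.
      apply: winner_char => [d|d].
        have Dd := D i k d; have := Smax d.
        case: (eqVneq k d) => [<-|kd]; first by []. rewrite (negbTE kd) in Dd.
        case: (top u i == d) Dd => /=; lia.
      have Dd := D i k d; have := Smax d; have := Smin d.
      case: (eqVneq k d) => [->|kd] //. rewrite (negbTE kd) in Dd.
      case: (top u i == d) Dd => /=; lia.
    rewrite [k == _]eq_sym (negbTE ki) /= addr0.
    have : ((u i j).+1%:R <= (u i k)%:R :> rat)%R by rewrite ler_nat.
    rewrite -addn1 natrD; lra.
- move=> Hnot i [c|]; last first.
    by rewrite utilA /util /deviate eqxx.
  rewrite utilA utilD.
  have key : (u i (winner (deviate a i (Some c)) aP) <= u i j)%N.
    have [Smax' Smin'] := winner_spec (deviate a i (Some c)) aP.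
    move: Smax' Smin'; set w := winner _ _ => Smax' Smin'.
    rewrite leqNgt; apply/negP => lt.
    have tj : top u i != j.
      apply/eqP => tj; have := top_max u i w; rewrite tj; lia.
    have Dj := D i c j; rewrite (negbTE tj) in Dj.
    case: (eqVneq c (top u i)) => [ct|ct].
      have Dw := D i c w; rewrite -ct in Dw.
      have Dj' := D i c j; rewrite -ct in Dj'.
      have := Smax' j; have := Smax w; have h1 := Smin' j; have h2 := Smin w.
      case: (c == w) Dw => /= Dw h3 h4.
      + have e1 : w = j by apply: val_inj; apply/eqP; rewrite eqn_leq h1 ?h2; lia.
        by move: lt; rewrite e1 ltnn.
      + have e1 : w = j by apply: val_inj; apply/eqP; rewrite eqn_leq h1 ?h2; lia.
        by move: lt; rewrite e1 ltnn.
    case: (eqVneq w c) => [wc|wc].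
      move: Smax' Smin' lt; rewrite wc => Smax' Smin' lt.
      have Dc := D i c c; rewrite eqxx eq_sym (negbTE ct) in Dc.
      have cj : c != j by apply/eqP => e; move: lt; rewrite e ltnn.
      have := Smax c; have := Smax' j.
      move=> hcj; rewrite leq_eqVlt => /orP [hc|hc].
        apply: Hnot; left; split.
          apply/card_gt1P; exists c, j; split => //; rewrite inW ?hc ?eqxx //.
        exists c; split; first by rewrite inW.
        by exists i; split => //; rewrite eq_sym.
      apply: Hnot; right; split.
        apply/set0Pn; exists c; rewrite inH; apply/andP; split; [lia|apply/eqP; lia].
      exists c; split; first by rewrite inH; apply/andP; split; [lia|apply/eqP; lia].
      exists i; split => //; first by rewrite eq_sym.
      have h : (c <= j)%N by apply: Smin'; lia.
      have cjn : (nat_of_ord c != nat_of_ord j) := cj.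
      lia.
    have Dw := D i c w; rewrite [c == w]eq_sym (negbTE wc) in Dw.
    have := Smax' j; have := Smax w; have h1 := Smin' j; have h2 := Smin w.
    move=> h3 h4.
    have e1 : w = j.
      apply: val_inj; apply/eqP; rewrite eqn_leq h1 ?h2 //;
      case: (top u i == w) Dw => /= Dw; case: (c == j) Dj => /= Dj; lia.
    by move: lt; rewrite e1 ltnn.
  have : ((u i (winner (deviate a i (Some c)) aP))%:R <= (u i j)%:R :> rat)%R
    by rewrite ler_nat.
  case: (c == top u i) => /=; lra.
Qed.
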